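(* Let $\{a_i\}_{i=1}^n$ be a non-decreasing sequence of real numbers and $\tau>0$. If $\pi$ is a permutation of $[n]$ such that $\pi(i)<\pi(j)$ whenever $a_j-a_i>\tau$, then $|a_{\pi(i)}-a_i|\le\tau$ for all $i\in[n]$. *)

(* Defs.v *)
From mathcomp Require Import all_boot all_order all_algebra all_fingroup.
Set Implicit Arguments. Unset Strict Implicit. Unset Printing Implicit Defensive.

(* Main.v *)
Require Import Defs.
From mathcomp Require Import all_boot all_order all_algebra all_fingroup.
Import Order.TTheory GRing.Theory Num.Theory.
Local Open Scope ring_scope.

Lemma key_card n (pi : 'S_n) (B : {set 'I_n}) x :
  x \in B -> pi @: B \subset B :\ x -> False.
Proof.
move=> xB sub; have := subset_leq_card sub.
rewrite card_imset; last exact: perm_inj.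
by rewrite (cardsD1 x B) xB /= add1n ltnn.
Qed.

Theorem lemma13 (R : realFieldType) (n : nat) (a : 'I_n -> R) (tau : R)
  (a_nondecr : forall i j : 'I_n, (i <= j)%N -> a i <= a j)
  (tau_pos : 0 < tau)
  (pi : 'S_n)
  (hpi : forall i j : 'I_n, a j - a i > tau -> (pi i < pi j)%N) :
  forall i : 'I_n, `|a (pi i) - a i| <= tau.
Proof.
move=> i; rewrite leNgt; apply/negP => H.
rewrite ltr_normr in H; case/orP: H => H.
- apply: (@key_card n pi [set k | tau < a k - a i] (pi i)); first by rewrite inE.
  apply/subsetP => _ /imsetP [l lB ->]; rewrite inE in lB.
  have lt : (pi i < pi l)%N by apply: hpi.
  rewrite !inE; apply/andP; split.
    by apply/eqP => E; rewrite E ltnn in lt.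
  apply: lt_le_trans H _; rewrite lerD2r a_nondecr // ltnW //.
- rewrite opprB in H.
  apply: (@key_card n pi [set k | tau < a i - a k] (pi i)); first by rewrite inE.
  apply/subsetP => _ /imsetP [l lB ->]; rewrite inE in lB.
  have lt : (pi l < pi i)%N by apply: hpi.
  rewrite !inE; apply/andP; split.
    by apply/eqP => E; rewrite E ltnn in lt.
  apply: lt_le_trans H _; rewrite lerD2l lerN2 a_nondecr // ltnW //.
Qed.
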